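(* Let $\{(\mathbf{x}^k,\mathbf{r}^k,\boldsymbol{\lambda}^k)\}$ be generated by Algorithm 1 with $0<\rho\le\frac{\beta}{m}$ and $\mathbf{P}_i\succeq L_i\mathbf{I}+\beta\mathbf{A}_i^\top\mathbf{A}_i$ for all $i$, and let $(\mathbf{x}^*,\boldsymbol{\lambda}^* )$ be a saddle point as in the assumption. Then $\lim_{k\to\infty}\mathbb{E}\,\Phi(\mathbf{x}^k,\mathbf{x}^*,\boldsymbol{\lambda}^* )=0$ and $\lim_{k\to\infty}\mathbb{E}\|\mathbf{r}^k\|=0$.
   Context: Problem: $\min_{\mathbf{x}} F(\mathbf{x}):=f(\mathbf{x})+g(\mathbf{x})$ s.t. $\mathbf{A}\mathbf{x}=\mathbf{b}$, where $\mathbf{x}=(\mathbf{x}_1;\ldots;\mathbf{x}_m)$ with blocks $\mathbf{x}_i\in\mathbb{R}^{n_i}$, $g(\mathbf{x})=\sum_{i=1}^m g_i(\mathbf{x}_i)$, $\mathbf{A}=[\mathbf{A}_1,\ldots,\mathbf{A}_m]$ with $\mathbf{A}_i\in\mathbb{R}^{q\times n_i}$, $\mathbf{b}\in\mathbb{R}^q$; $f$ is convex and continuously differentiable, each $g_i$ is proper, convex, lower semicontinuous. Define $\Phi(\bar{\mathbf{x}},\mathbf{x},\boldsymbol{\lambda})=F(\bar{\mathbf{x}})-F(\mathbf{x})-\langle\boldsymbol{\lambda},\mathbf{A}\bar{\mathbf{x}}-\mathbf{b}\rangle$. $\mathbf{U}_i\mathbf{y}$ denotes the vector whose $i$-th block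 is $\mathbf{y}_i$ and other blocks zero. Assumption (existence of a solution): there is $(\mathbf{x}^*,\boldsymbol{\lambda}^* )$ with $\mathbf{A}\mathbf{x}^*=\mathbf{b}$ and $\Phi(\mathbf{x},\mathbf{x}^*,\boldsymbol{\lambda}^* )\ge0$ for all $\mathbf{x}$. Assumption (gradient Lipschitz continuity): there are constants $L_i>0$ and $L_r$ with $\|\nabla_i f(\mathbf{x}+\mathbf{U}_i\mathbf{y})-\nabla_i f(\mathbf{x})\|\le L_i\|\mathbf{y}_i\|$ and $\|\nabla f(\mathbf{x}+\mathbf{U}_i\mathbf{y})-\nabla f(\mathbf{x})\|\le L_r\|\mathbf{y}_i\|$ for all $i,\mathbf{x},\mathbf{y}$. Algorithm 1 (randomized primal-dual block update): choose $\mathbf{x}^0$, set $\boldsymbol{\lambda}^0=\mathbf{0}$, $\mathbf{r}^0=\mathbf{A}\mathbf{x}^0-\mathbf{b}$, parameters $\beta>0,\rho>0$, symmetric PSD matrices $\mathbf{P}_i$. For $k=0,1,\ldots$: pick $i_k\in\{1,\ldots,m\}$ uniformly at random, independent of $i_0,\ldots,i_{k-1}$; set $\mathbf{x}_i^{k+1}=\mathbf{x}_i^k$ for $i\ne i_k$ and $$\mathbf{x}_{i_k}^{k+1}\in\arg\min_{\mathbf{x}_{i_k}}\big\langle\nabla_{i_k} f(\mathbf{x}^k)-\mathbf{A}_{i_k}^\top(\boldsymbol{\lambda}^k-\beta\mathbf{r}^k),\mathbf{x}_{i_k}\big\rangle+g_{i_k}(\mathbf{x}_{i_k})+\tfrac12\|\mathbf{x}_{i_k}-\mathbf{x}_{i_k}^k\|_{\mathbf{P}_{i_k}}^2$$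 (with $\|\mathbf{z}\|_{\mathbf{M}}^2=\mathbf{z}^\top\mathbf{M}\mathbf{z}$); then $\mathbf{r}^{k+1}=\mathbf{r}^k+\mathbf{A}_{i_k}(\mathbf{x}_{i_k}^{k+1}-\mathbf{x}_{i_k}^k)$ (so $\mathbf{r}^k=\mathbf{A}\mathbf{x}^k-\mathbf{b}$) and $\boldsymbol{\lambda}^{k+1}=\boldsymbol{\lambda}^k-\rho\mathbf{r}^{k+1}$. $\mathbb{E}$ is the total expectation over $i_0,i_1,\ldots$. *)

(* Defs.v *)
From Stdlib Require Import Reals.
From mathcomp Require Import ssreflect ssrfun ssrbool eqtype ssrnat seq fintype bigop.
Unset Printing Implicit Defensive.
Open Scope R_scope.

(* Extended reals (-oo never needed: proper functions take values in R ∪ {+oo}). *)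
Inductive ER := Fin of R | PInf.

Definition ER_add (a b : ER) : ER :=
  match a, b with Fin x, Fin y => Fin (x + y) | _, _ => PInf end.
(* scaling, only used with positive scalars *)
Definition ER_scale (t : R) (a : ER) : ER :=
  match a with Fin x => Fin (t * x) | PInf => PInf end.
Definition ER_le (a b : ER) : Prop :=
  match a, b with
  | _, PInf => True | PInf, Fin _ => False | Fin x, Fin y => x <= y end.
Definition ER_lt (a b : ER) : Prop :=
  match a, b with
  | Fin x, PInf => True | PInf, _ => False | Fin x, Fin y => x < y end.

Definition vec (d : nat) := 'I_d -> R.
Definition dot {d} (u v : vec d) : R := \big[Rplus/0]_(j < d) (u j * v j).
Definition vnorm {d} (u : vec d) : R := sqrt (dot u u).
Definition vsub {d} (u v : vec d) : vec d := fun j => u j - v j.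
Definition vlin {d} (t : R) (u v : vec d) : vec d := fun j => t * u j + (1 - t) * v j.

Definition BV (m : nat) (n : 'I_m -> nat) := forall i : 'I_m, vec (n i).
Definition badd {m n} (x y : BV m n) : BV m n := fun i j => x i j + y i j.
Definition bsub {m n} (x y : BV m n) : BV m n := fun i j => x i j - y i j.
Definition bdot {m n} (x y : BV m n) : R := \big[Rplus/0]_(i < m) dot (x i) (y i).
Definition bnorm {m n} (x : BV m n) : R := sqrt (bdot x x).
Definition Ublk {m n} (i : 'I_m) (y : BV m n) : BV m n :=
  fun j => if j == i then y j else (fun _ => 0).

(* A = [A_1, ..., A_m], A_i : q x n_i ; entries A i r a *)
Definition Amat (m : nat) (n : 'I_m -> nat) q := forall i : 'I_m, 'I_q -> 'I_(n i) -> R.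
Definition Aiz {m n q} (A : Amat m n q) (i : 'I_m) (z : vec (n i)) : vec q :=
  fun r => \big[Rplus/0]_(a < n i) (A i r a * z a).
Definition AiT {m n q} (A : Amat m n q) (i : 'I_m) (v : vec q) : vec (n i) :=
  fun a => \big[Rplus/0]_(r < q) (A i r a * v r).
Definition resid {m n q} (A : Amat m n q) (b : vec q) (x : BV m n) : vec q :=
  fun r => \big[Rplus/0]_(i < m) Aiz A i (x i) r - b r.

Definition qform {d} (M : 'I_d -> 'I_d -> R) (z : vec d) : R :=
  \big[Rplus/0]_(a < d) \big[Rplus/0]_(c < d) (z a * M a c * z c).

Definition convexR {m n} (f : BV m n -> R) : Prop :=
  forall x y t, 0 <= t <= 1 ->
    f (fun i j => t * x i j + (1 - t) * y i j) <= t * f x + (1 - t) * f y.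
Definition is_gradient {m n} (f : BV m n -> R) (gf : BV m n -> BV m n) : Prop :=
  forall x eps, 0 < eps -> exists delta, 0 < delta /\
    forall h, bnorm h < delta ->
      Rabs (f (badd x h) - f x - bdot (gf x) h) <= eps * bnorm h.
Definition continuousBV {m n} (G : BV m n -> BV m n) : Prop :=
  forall x eps, 0 < eps -> exists delta, 0 < delta /\
    forall y, bnorm (bsub y x) < delta -> bnorm (bsub (G y) (G x)) < eps.

Definition properER {d} (g : vec d -> ER) : Prop := exists u, g u <> PInf.
Definition convexER {d} (g : vec d -> ER) : Prop :=
  forall u v t, 0 < t < 1 ->
    ER_le (g (vlin t u v)) (ER_add (ER_scale t (g u)) (ER_scale (1 - t) (g v))).
Definition lscER {d} (g : vec d -> ER) : Prop :=
  forall u c, ER_lt (Fin c) (g u) -> exists delta, 0 < delta /\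
    forall v, vnorm (vsub v u) < delta -> ER_lt (Fin c) (g v).

Definition Fobj {m n} (f : BV m n -> R) (g : forall i : 'I_m, vec (n i) -> ER)
  (x : BV m n) : ER := ER_add (Fin (f x)) (\big[ER_add/Fin 0]_(i < m) g i (x i)).

(* Phi(xbar, x, lam) = F(xbar) - F(x) - <lam, A xbar - b>; only meaningful when
   F(x) is finite (PInf returned otherwise, never used). *)
Definition Phi {m n q} (f : BV m n -> R) (g : forall i : 'I_m, vec (n i) -> ER)
  (A : Amat m n q) (b : vec q) (xbar x : BV m n) (lam : vec q) : ER :=
  match Fobj f g x with
  | Fin v => ER_add (Fobj f g xbar) (Fin (- v - dot lam (resid A b xbar)))
  | PInf => PInf
  end.

(* Total expectation over i_0,...,i_{k-1} i.i.d. uniform on {1..m}: the quantity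
   h depends on the history s = [:: i_0; ...; i_{k-1}]. *)
Fixpoint esum {m : nat} (k : nat) (pre : seq 'I_m) (h : seq 'I_m -> R) : R :=
  match k with
  | 0 => h pre
  | k'.+1 => / INR m * \big[Rplus/0]_(i < m) esum k' (rcons pre i) h
  end.
Definition Expect {m} (k : nat) (h : seq 'I_m -> R) : R := esum k [::] h.

Fixpoint esumER {m : nat} (k : nat) (pre : seq 'I_m) (h : seq 'I_m -> ER) : ER :=
  match k with
  | 0 => h pre
  | k'.+1 => ER_scale (/ INR m) (\big[ER_add/Fin 0]_(i < m) esumER k' (rcons pre i) h)
  end.
Definition ExpectER {m} (k : nat) (h : seq 'I_m -> ER) : ER := esumER k [::] h.

Definition ER_cv (u : nat -> ER) (l : R) : Prop :=
  forall eps, 0 < eps -> exists N, forall k, (N <= k)%nat ->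
    exists v, u k = Fin v /\ Rabs (v - l) < eps.

Definition subobj {m n q} (A : Amat m n q) (b : vec q) (gf : BV m n -> BV m n)
  (g : forall i : 'I_m, vec (n i) -> ER) (P : forall i : 'I_m, 'I_(n i) -> 'I_(n i) -> R)
  (beta : R) (xk : BV m n) (lamk : vec q) (i : 'I_m) (z : vec (n i)) : ER :=
  ER_add
    (Fin (dot (fun a => gf xk i a - AiT A i (fun r => lamk r - beta * resid A b xk r) a) z
          + / 2 * qform (P i) (vsub z (xk i))))
    (g i z).

(* Main.v *)
Require Import Defs.
From HB Require Import structures.
From Stdlib Require Import Reals Lra FunctionalExtensionality.
From mathcomp Require Import ssreflect ssrfun ssrbool eqtype ssrnat seq fintype bigop.
From mathcomp Require Import zify.
Open Scope R_scope.
Set Warnings "-notation-overridden,-redundant-canonical-projection".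


Lemma RplusA : associative Rplus. Proof. move=> *; ring. Qed.
HB.instance Definition _ := Monoid.isComLaw.Build R 0 Rplus RplusA Rplus_comm Rplus_0_l.
HB.instance Definition _ := Monoid.isMulLaw.Build R 0 Rmult Rmult_0_l Rmult_0_r.
HB.instance Definition _ := Monoid.isAddLaw.Build R Rmult Rplus Rmult_plus_distr_r Rmult_plus_distr_l.

Section Sums.
Variable d : nat.
Implicit Types F G : 'I_d -> R.
Lemma sE F G : (forall j, F j = G j) -> \big[Rplus/0]_(j < d) F j = \big[Rplus/0]_(j < d) G j.
Proof. by move=> H; apply: eq_bigr => j _. Qed.
Lemma sD F G : (\big[Rplus/0]_(j < d) F j) + (\big[Rplus/0]_(j < d) G j) = \big[Rplus/0]_(j < d) (F j + G j).
Proof. by rewrite big_split. Qed.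
Lemma sZ c F : c * (\big[Rplus/0]_(j < d) F j) = \big[Rplus/0]_(j < d) (c * F j).
Proof. by rewrite big_distrr. Qed.
Lemma sN F : - (\big[Rplus/0]_(j < d) F j) = \big[Rplus/0]_(j < d) (- F j).
Proof. have ->: - (\big[Rplus/0]_(j < d) F j) = (-1) * (\big[Rplus/0]_(j < d) F j) by ring.
rewrite sZ; apply: sE => j; ring. Qed.
Lemma sB F G : (\big[Rplus/0]_(j < d) F j) - (\big[Rplus/0]_(j < d) G j) = \big[Rplus/0]_(j < d) (F j - G j).
Proof. by rewrite /Rminus sN sD. Qed.
Lemma sLe F G : (forall j, F j <= G j) -> \big[Rplus/0]_(j < d) F j <= \big[Rplus/0]_(j < d) G j.
Proof.
move=> H; apply: (big_ind2 (fun a b => a <= b)) => //; first lra.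
by move=> *; apply Rplus_le_compat.
Qed.
Lemma s0 : \big[Rplus/0]_(j < d) 0 = 0.
Proof. by rewrite big1. Qed.
Lemma sge0 F : (forall j, 0 <= F j) -> 0 <= \big[Rplus/0]_(j < d) F j.
Proof. move=> H; apply: (big_ind (fun a => 0 <= a)) => //; [lra | move=> *; lra]. Qed.
Lemma sD1 (i : 'I_d) F : \big[Rplus/0]_(j < d) F j = F i + (\big[Rplus/0]_(j < d | j != i) F j).
Proof. by rewrite (bigD1 i). Qed.
End Sums.
Arguments sD {d}. Arguments sZ {d}. Arguments sB {d}. Arguments sE {d}.
Arguments sLe {d}. Arguments sD1 {d}.

Lemma sRecr d (F : 'I_d.+1 -> R) :
  \big[Rplus/0]_(i < d.+1) F i = (\big[Rplus/0]_(i < d) F (widen_ord (leqnSn d) i)) + F ord_max.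
Proof. exact: big_ord_recr. Qed.

Lemma sX (d e : nat) (F : 'I_d -> 'I_e -> R) :
  \big[Rplus/0]_(i < d) \big[Rplus/0]_(j < e) F i j = \big[Rplus/0]_(j < e) \big[Rplus/0]_(i < d) F i j.
Proof. exact: exchange_big. Qed.

Lemma dotC d (u v : vec d) : dot u v = dot v u.
Proof. rewrite /dot; apply: sE => j; ring. Qed.
Lemma dot_ge0 d (u : vec d) : 0 <= dot u u.
Proof. apply: sge0 => j; nra. Qed.
Lemma vnorm_sq d (u : vec d) : vnorm u * vnorm u = dot u u.
Proof. rewrite /vnorm sqrt_sqrt //; exact: dot_ge0. Qed.
Lemma vnorm_ge0 d (u : vec d) : 0 <= vnorm u.
Proof. exact: sqrt_pos. Qed.
Lemma bdot_ge0 m n (u : BV m n) : 0 <= bdot u u.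
Proof. apply: sge0 => j; exact: dot_ge0. Qed.

Lemma dot_amgm d (a y : vec d) c : 2 * c * dot a y <= dot a a + c * c * dot y y.
Proof.
rewrite /dot !sZ sD; apply: sLe => j; have := pow2_ge_0 (a j - c * y j); nra.
Qed.


Lemma ER_addA : associative ER_add. Proof. by case=> [a|] [b|] [c|] //=; rewrite RplusA. Qed.
Lemma ER_addC : commutative ER_add. Proof. by case=> [a|] [b|] //=; rewrite Rplus_comm. Qed.
Lemma ER_add0 : left_id (Fin 0) ER_add. Proof. by case=> [a|] //=; rewrite Rplus_0_l. Qed.
HB.instance Definition _ := Monoid.isComLaw.Build ER (Fin 0) ER_add ER_addA ER_addC ER_add0.

Definition erv (a : ER) : R := match a with Fin v => v | PInf => 0 end.

Lemma bigER_fin (I : finType) (F : I -> ER) (G : I -> R) :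
  (forall j, F j = Fin (G j)) ->
  \big[ER_add/Fin 0]_j F j = Fin (\big[Rplus/0]_j G j).
Proof.
move=> H; apply: (big_rec2 (fun a b => a = Fin b)) => // j y1 y2 _ ->.
by rewrite H.
Qed.

Lemma bigER_inf (I : finType) (F : I -> ER) (j : I) :
  F j = PInf -> \big[ER_add/Fin 0]_i F i = PInf.
Proof. by move=> H; rewrite (bigD1 j) //= H. Qed.

Lemma bigER_fin_each (I : finType) (F : I -> ER) :
  \big[ER_add/Fin 0]_i F i <> PInf -> forall j, F j = Fin (erv (F j)).
Proof.
move=> H j; case E: (F j) => [v|] //.
by exfalso; apply: H; apply: (bigER_inf _ _ _ E).
Qed.

Section Expect.
Variable m : nat.
Variable Hm : (0 < m)%nat.

Lemma INRm_pos : 0 < INR m.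
Proof. apply: lt_0_INR; apply/ltP; exact: Hm. Qed.

Lemma esumER_fin k (p0 : seq 'I_m) (h : seq 'I_m -> ER) (h' : seq 'I_m -> R) :
  (forall s, h s = Fin (h' s)) -> esumER k p0 h = Fin (esum k p0 h').
Proof.
move=> H; elim: k p0 => [|k IH] p0 /=; first exact: H.
by rewrite (@bigER_fin _ _ (fun i => esum k (rcons p0 i) h')).
Qed.

Lemma esum_S k p0 (h : seq 'I_m -> R) :
  esum k.+1 p0 h = / INR m * \big[Rplus/0]_(i < m) esum k (rcons p0 i) h.
Proof. by []. Qed.

Definition avg (h : seq 'I_m -> R) (s : seq 'I_m) : R :=
  / INR m * \big[Rplus/0]_(i < m) h (rcons s i).

Lemma esum_tower k p0 h : esum k.+1 p0 h = esum k p0 (avg h).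
Proof.
elim: k p0 => [|k IH] p0 //.
transitivity (/INR m * \big[Rplus/0]_(i<m) esum k.+1 (rcons p0 i) h) => //.
by rewrite (sE _ _ (fun i => IH (rcons p0 i))).
Qed.

Lemma esum_le k p0 (h1 h2 : seq 'I_m -> R) :
  (forall s, h1 s <= h2 s) -> esum k p0 h1 <= esum k p0 h2.
Proof.
move=> H; elim: k p0 => [|k IH] p0 //; first exact: H.
rewrite !esum_S; apply: Rmult_le_compat_l; first by left; apply: Rinv_0_lt_compat; exact: INRm_pos.
by apply: sLe.
Qed.

Lemma esum_lin k p0 a (h1 h2 : seq 'I_m -> R) :
  esum k p0 (fun s => a * h1 s + h2 s) = a * esum k p0 h1 + esum k p0 h2.
Proof.
elim: k p0 => [|k IH] p0 //.
rewrite !esum_S (sE _ _ (fun i => IH (rcons p0 i))) -sD -sZ; ring.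
Qed.

Lemma sum_const (c : R) : \big[Rplus/0]_(i < m) c = INR m * c.
Proof.
elim: (m) => [|k IH]; first by rewrite big_ord0 /=; ring.
rewrite sRecr IH S_INR; ring.
Qed.

Lemma esum_const k (p0 : seq 'I_m) c : esum k p0 (fun _ => c) = c.
Proof.
elim: k p0 => [|k IH] p0 //.
rewrite esum_S (sE _ _ (fun i => IH (rcons p0 i))) sum_const.
field; apply: Rgt_not_eq; exact: INRm_pos.
Qed.
End Expect.


Lemma BV_ext m n (x y : BV m n) : (forall i j, x i j = y i j) -> x = y.
Proof.
move=> H; apply: functional_extensionality_dep => i.
apply: functional_extensionality => j; exact: H.
Qed.

Definition bscale {m n} (t : R) (x : BV m n) : BV m n := fun i j => t * x i j.

Lemma bdot_scale_r m n (u v : BV m n) t : bdot u (bscale t v) = t * bdot u v.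
Proof. rewrite /bdot sZ; apply: sE => i; rewrite /dot sZ; apply: sE => j; rewrite /bscale; ring. Qed.

Lemma bnorm_scale m n (v : BV m n) t : bnorm (bscale t v) = Rabs t * bnorm v.
Proof.
rewrite /bnorm -sqrt_Rsqr_abs -sqrt_mult_alt; last exact: Rle_0_sqr.
congr sqrt; rewrite /Rsqr /bdot sZ; apply: sE => i; rewrite /dot sZ; apply: sE => j.
rewrite /bscale; ring.
Qed.

Lemma bnorm_ge0 m n (v : BV m n) : 0 <= bnorm v.
Proof. exact: sqrt_pos. Qed.
Arguments bnorm_ge0 {m n}.

Lemma dot_scale_l d (u v : vec d) t : dot (fun j => t * u j) v = t * dot u v.
Proof. rewrite /dot sZ; apply: sE => j; ring. Qed.

Lemma Rabs_split a c : Rabs a <= c -> - c <= a /\ a <= c.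
Proof.
move=> H; split; last exact: Rle_trans (Rle_abs a) H.
have := Rle_abs (- a); rewrite Rabs_Ropp; lra.
Qed.

Lemma grad_ineq m n (f : BV m n -> R) gf :
  convexR f -> is_gradient f gf ->
  forall x y, f x + bdot (gf x) (bsub y x) <= f y.
Proof.
move=> Hc Hg x y.
set h := bsub y x.
have key : forall eps, 0 < eps -> bdot (gf x) h <= f y - f x + eps * bnorm h.
  move=> eps Heps.
  have [delta [Hd Hdel]] := Hg x eps Heps.
  have Hh := bnorm_ge0 h.
  set t := Rmin (1/2) (delta / (2 * (bnorm h + 1))).
  have Ht0 : 0 < t.
    apply: Rmin_pos; first lra.
    apply: Rdiv_lt_0_compat => //; lra.
  have Ht1 : t <= 1/2 by apply: Rmin_l.
  have Ht2 : t <= delta / (2 * (bnorm h + 1)) by apply: Rmin_r.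
  have Hnorm : bnorm (bscale t h) < delta.
    rewrite bnorm_scale Rabs_right; last lra.
    have : t * (2 * (bnorm h + 1)) <= delta.
      move: Ht2; rewrite /Rdiv => Ht2.
      have Hp : 0 < 2 * (bnorm h + 1) by lra.
      have := Rmult_le_compat_r _ _ _ (Rlt_le _ _ Hp) Ht2.
      by rewrite Rmult_assoc Rinv_l ?Rmult_1_r; lra.
    nra.
  have E1 := Hdel _ Hnorm.
  have Eq : badd x (bscale t h) = (fun i j => t * y i j + (1 - t) * x i j).
    by apply: BV_ext => i j; rewrite /badd /bscale /h /bsub; ring.
  rewrite Eq bdot_scale_r bnorm_scale (Rabs_right t) in E1; last lra.
  have E2 := Hc y x t (conj (Rlt_le _ _ Ht0) (Rle_trans _ _ _ Ht1 (ltac:(lra) : 1/2 <= 1))).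
  have [E3 E4] := Rabs_split _ _ E1.
  have : t * bdot (gf x) h <= t * (f y - f x + eps * bnorm h). lra.
  move=> H4; apply: (Rmult_le_reg_l t) => //.
apply: Rle_plus_epsilon => eps Heps.
have Hh := bnorm_ge0 h.
have := key (eps / (bnorm h + 1)) (ltac:(apply: Rdiv_lt_0_compat; lra)).
have : eps / (bnorm h + 1) * bnorm h <= eps.
  rewrite /Rdiv Rmult_assoc (Rmult_comm _ (bnorm h)) -Rmult_assoc.
  have : bnorm h * / (bnorm h + 1) <= 1.
    rewrite -[X in _ <= X](Rinv_r (bnorm h + 1)); last lra.
    apply: Rmult_le_compat_r; [left; apply: Rinv_0_lt_compat; lra | lra].
  move=> H1; rewrite Rmult_assoc; nra.
lra.
Qed.


Lemma dot0r d (u : vec d) : dot u (fun _ => 0) = 0.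
Proof. by rewrite /dot; apply: big1 => j _; ring. Qed.

Lemma bdot_Ublk m n (u y : BV m n) i : bdot u (Ublk i y) = dot (u i) (y i).
Proof.
rewrite /bdot (sD1 i) /Ublk eqxx.
rewrite (eq_bigr (fun _ => 0)); first by rewrite big1_eq Rplus_0_r.
by move=> j /negPf ->; exact: dot0r.
Qed.

Lemma phi_deriv m n (f : BV m n -> R) gf (x v : BV m n) t :
  is_gradient f gf ->
  derivable_pt_lim (fun t => f (badd x (bscale t v))) t
     (bdot (gf (badd x (bscale t v))) v).
Proof.
move=> Hg eps Heps.
set z := badd x (bscale t v).
have Hv := bnorm_ge0 v.
have [delta [Hd Hdel]] := Hg z (eps / (2 * (bnorm v + 1))) (ltac:(apply: Rdiv_lt_0_compat; lra)).
have Hdp : 0 < delta / (bnorm v + 1) by apply: Rdiv_lt_0_compat; lra.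
exists (mkposreal _ Hdp) => h Hh0 Hh /=.
have Eq : badd x (bscale (t + h) v) = badd z (bscale h v).
  by apply: BV_ext => i j; rewrite /z /badd /bscale; ring.
rewrite Eq.
have Hn : bnorm (bscale h v) < delta.
  rewrite bnorm_scale.
  have Hah := Rabs_pos h.
  have : Rabs h * (bnorm v + 1) < delta.
    move: Hh; rewrite /Rdiv => Hh.
    have Hp : 0 < bnorm v + 1 by lra.
    have := Rmult_lt_compat_r _ _ _ Hp Hh.
    by rewrite Rmult_assoc Rinv_l ?Rmult_1_r; lra.
  nra.
have E := Hdel _ Hn.
rewrite bdot_scale_r bnorm_scale in E.
have Hah : 0 < Rabs h by apply: Rabs_pos_lt.
have -> : (f (badd z (bscale h v)) - f z) / h - bdot (gf z) v =
          (f (badd z (bscale h v)) - f z - h * bdot (gf z) v) / h.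
  by field.
rewrite /Rdiv Rabs_mult Rabs_inv.
apply: (Rmult_lt_reg_r (Rabs h)) => //.
rewrite Rmult_assoc Rinv_l ?Rmult_1_r; last lra.
apply: (Rle_lt_trans _ _ _ E).
have : eps / (2 * (bnorm v + 1)) * bnorm v < eps.
  have Hp : 0 < 2 * (bnorm v + 1) by lra.
  have : eps / (2 * (bnorm v + 1)) * (2 * (bnorm v + 1)) = eps.
    by field; lra.
  have : 0 < eps / (2 * (bnorm v + 1)) by apply: Rdiv_lt_0_compat.
  nra.
nra.
Qed.

Lemma dpl_eq f x l1 l2 : l1 = l2 -> derivable_pt_lim f x l1 -> derivable_pt_lim f x l2.
Proof. by move=> ->. Qed.

Lemma poly_deriv K c t : derivable_pt_lim (fun t => t * K + c * (t * t)) t (K + 2 * c * t).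
Proof.
have H1 := derivable_pt_lim_mult id (fct_cte K) t _ _ (derivable_pt_lim_id t) (derivable_pt_lim_const K t).
have H2 := derivable_pt_lim_mult (fct_cte c) (id * id)%F t _ _ (derivable_pt_lim_const c t)
   (derivable_pt_lim_mult id id t _ _ (derivable_pt_lim_id t) (derivable_pt_lim_id t)).
have H3 := derivable_pt_lim_plus _ _ t _ _ H1 H2.
apply: (dpl_eq _ _ _ _ _ H3).
rewrite /fct_cte /mult_fct /=; ring.
Qed.

Lemma dot_vsub_l d (u w y : vec d) : dot (vsub u w) y = dot u y - dot w y.
Proof. rewrite /dot sB; apply: sE => j; rewrite /vsub; ring. Qed.

Lemma vnorm_scale d (u : vec d) t : vnorm (fun j => t * u j) = Rabs t * vnorm u.
Proof.
rewrite /vnorm -sqrt_Rsqr_abs -sqrt_mult_alt; last exact: Rle_0_sqr.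
congr sqrt; rewrite /Rsqr /dot sZ; apply: sE => j; ring.
Qed.

Lemma descent m n (f : BV m n -> R) gf (i : 'I_m) (Li : R) :
  is_gradient f gf -> 0 < Li ->
  (forall x y, vnorm (vsub (gf (badd x (Ublk i y)) i) (gf x i)) <= Li * vnorm (y i)) ->
  forall x y, f (badd x (Ublk i y)) <= f x + dot (gf x i) (y i) + Li / 2 * dot (y i) (y i).
Proof.
move=> Hg HL HLi x y.
set v := Ublk i y.
set K := dot (gf x i) (y i).
set Y := dot (y i) (y i).
set psi := fun t => f (badd x (bscale t v)) - (t * K + Li / 2 * (t * t) * Y).
set psi' := fun t => bdot (gf (badd x (bscale t v))) v - (K + 2 * (Li / 2 * Y) * t).
have Hd : forall c, 0 <= c <= 1 -> derivable_pt_lim psi c (psi' c).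
  move=> c _.
  have H := derivable_pt_lim_minus _ _ c _ _ (phi_deriv _ _ f gf x v c Hg) (poly_deriv K (Li / 2 * Y) c).
  have E : psi = minus_fct (fun t => f (badd x (bscale t v))) (fun t => t * K + Li / 2 * Y * (t * t)).
    apply: functional_extensionality => t; rewrite /psi /minus_fct; ring.
  by rewrite E.
have [c [Hc1 Hc2]] := MVT_cor2 psi psi' 0 1 Rlt_0_1 Hd.
have Hneg : psi' c <= 0.
  rewrite /psi' /v bdot_Ublk.
  have Ez : badd x (bscale c (Ublk i y)) = badd x (Ublk i (bscale c y)).
    apply: BV_ext => j a; rewrite /badd /bscale /Ublk.
    case: (j == i); ring.
  rewrite Ez.
  set a := vsub (gf (badd x (Ublk i (bscale c y))) i) (gf x i).
  have Ha : vnorm a <= Li * c * vnorm (y i).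
    have := HLi x (bscale c y).
    rewrite /bscale vnorm_scale Rabs_right; last lra.
    by rewrite Rmult_assoc.
  have Haa : dot a a <= (Li * c) * (Li * c) * Y.
    rewrite -vnorm_sq /Y -vnorm_sq.
    have := vnorm_ge0 _ a; have := vnorm_ge0 _ (y i).
    have : 0 <= Li * c by nra.
    nra.
  have Ham := dot_amgm _ a (y i) (Li * c).
  have Hda : dot (gf (badd x (Ublk i (bscale c y))) i) (y i) - K = dot a (y i).
    by rewrite /a dot_vsub_l.
  have HY : 0 <= Y by exact: dot_ge0.
  have Hlc : 0 < Li * c by nra.
  rewrite -/Y in Ham.
  have : dot a (y i) <= Li * c * Y.
    apply: (Rmult_le_reg_l (2 * (Li * c))); first lra.
    nra.
  lra.
have Hpsi : psi 1 <= psi 0 by nra.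
have E1 : badd x (bscale 1 v) = badd x (Ublk i y).
  by apply: BV_ext => j a; rewrite /badd /bscale /v Rmult_1_l.
have E0 : badd x (bscale 0 v) = x.
  by apply: BV_ext => j a; rewrite /badd /bscale Rmult_0_l Rplus_0_r.
move: Hpsi; rewrite /psi E1 E0 /v => H.
have e1 : 1 * K + Li / 2 * (1 * 1) * Y = K + Li / 2 * Y by ring.
have e2 : 0 * K + Li / 2 * (0 * 0) * Y = 0 by ring.
lra.
Qed.


Definition bf {d} (M : 'I_d -> 'I_d -> R) (u v : vec d) : R :=
  \big[Rplus/0]_(a < d) \big[Rplus/0]_(c < d) (u a * M a c * v c).

Lemma bf_sym d (M : 'I_d -> 'I_d -> R) u v :
  (forall a c, M a c = M c a) -> bf M v u = bf M u v.
Proof.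
move=> HM; rewrite /bf sX; apply: sE => a; apply: sE => c; rewrite HM; ring.
Qed.

Lemma qform_expand d (M : 'I_d -> 'I_d -> R) (u v : vec d) t :
  (forall a c, M a c = M c a) ->
  qform M (fun j => u j + t * v j) = qform M u + 2 * t * bf M u v + t * t * qform M v.
Proof.
move=> HM.
have E : qform M u + 2 * t * bf M u v + t * t * qform M v =
         qform M u + t * bf M u v + t * bf M v u + t * t * qform M v.
  rewrite (bf_sym _ _ u v) //; ring.
rewrite E /qform /bf !sZ !sD; apply: sE => a.
rewrite !sZ !sD; apply: sE => c; ring.
Qed.

Lemma qform_ge0_expand d (M : 'I_d -> 'I_d -> R) (u v : vec d) :
  (forall a c, M a c = M c a) ->
  qform M (vsub u v) = qform M u - 2 * bf M u v + qform M v.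
Proof.
move=> HM.
have -> : vsub u v = (fun j => u j + (-1) * v j).
  by apply: functional_extensionality => j; rewrite /vsub; ring.
rewrite qform_expand //; ring.
Qed.

Lemma dot_vsub_r d (c u w : vec d) : dot c (vsub u w) = dot c u - dot c w.
Proof. rewrite /dot sB; apply: sE => j; rewrite /vsub; ring. Qed.

Lemma small_t a b K : (forall t, 0 < t < 1 -> a <= b + t * K) -> a <= b.
Proof.
move=> H; apply: Rle_plus_epsilon => eps Heps.
set t := Rmin (1/2) (eps / (Rabs K + 1)).
have HK := Rabs_pos K.
have Ht0 : 0 < t by apply: Rmin_pos; [lra | apply: Rdiv_lt_0_compat; lra].
have Ht1 : t <= 1/2 by apply: Rmin_l.
have Ht2 : t <= eps / (Rabs K + 1) by apply: Rmin_r.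
have := H t (conj Ht0 (ltac:(lra) : t < 1)).
have : t * K <= eps.
  have : t * (Rabs K + 1) <= eps.
    have Hp : 0 < Rabs K + 1 by lra.
    have := Rmult_le_compat_r _ _ _ (Rlt_le _ _ Hp) Ht2.
    rewrite /Rdiv Rmult_assoc Rinv_l ?Rmult_1_r; lra.
  have := Rle_abs K; nra.
lra.
Qed.

Lemma VI_argmin d (M : 'I_d -> 'I_d -> R) (G : vec d -> ER) (c xk z w : vec d) gz gw :
  (forall a c, M a c = M c a) -> convexER G ->
  G z = Fin gz -> G w = Fin gw ->
  (forall w', ER_le (ER_add (Fin (dot c z + / 2 * qform M (vsub z xk))) (G z))
                    (ER_add (Fin (dot c w' + / 2 * qform M (vsub w' xk))) (G w'))) ->
  gz - gw <= dot c (vsub w z) + bf M (vsub z xk) (vsub w z).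
Proof.
move=> HM Hc Hz Hw Hmin.
apply: (small_t _ _ (/ 2 * qform M (vsub w z))) => t Ht.
have Hcv := Hc w z t Ht.
rewrite Hw Hz /= in Hcv.
move: (Hmin (vlin t w z)) Hcv; rewrite Hz.
case: (G (vlin t w z)) => [gt|] //= H1 H2.
have E1 : vsub (vlin t w z) xk = (fun j => vsub z xk j + t * vsub w z j).
  by apply: functional_extensionality => j; rewrite /vsub /vlin; ring.
have E2 : dot c (vlin t w z) = t * dot c w + (1 - t) * dot c z.
  by rewrite /dot !sZ sD; apply: sE => j; rewrite /vlin; ring.
rewrite E1 qform_expand // E2 in H1.
rewrite dot_vsub_r.
have : t * (gz - gw) <= t * (dot c w - dot c z + bf M (vsub z xk) (vsub w z) + t * (/ 2 * qform M (vsub w z))).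
  nra.
move=> H3; apply: (Rmult_le_reg_l t) => //; lra.
Qed.


Lemma dot_AiT m n q (A : Amat m n q) i (u : vec q) (v : vec (n i)) :
  dot (AiT A i u) v = dot u (Aiz A i v).
Proof.
rewrite /dot /AiT /Aiz.
have -> : \big[Rplus/0]_(j < n i) ((\big[Rplus/0]_(r < q) (A i r j * u r)) * v j) =
          \big[Rplus/0]_(j < n i) \big[Rplus/0]_(r < q) (A i r j * u r * v j).
  apply: sE => j; rewrite Rmult_comm sZ; apply: sE => r; ring.
rewrite sX; apply: sE => r; rewrite sZ; apply: sE => j; ring.
Qed.

Lemma Aiz_sub m n q (A : Amat m n q) i (u w : vec (n i)) r :
  Aiz A i (vsub u w) r = Aiz A i u r - Aiz A i w r.
Proof. rewrite /Aiz sB; apply: sE => j; rewrite /vsub; ring. Qed.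

Lemma dot_add_r d (c u w : vec d) : dot c (fun j => u j + w j) = dot c u + dot c w.
Proof. rewrite /dot sD; apply: sE => j; ring. Qed.

Lemma dot_add_l d (u v c : vec d) : dot (fun j => u j + v j) c = dot u c + dot v c.
Proof. rewrite /dot sD; apply: sE => j; ring. Qed.
Lemma dot_add_sq d (u v : vec d) :
  dot (fun j => u j + v j) (fun j => u j + v j) = dot u u + 2 * dot u v + dot v v.
Proof. rewrite /dot !sZ !sD; apply: sE => j; ring. Qed.
Lemma dot_lin_sq d (u v : vec d) t :
  dot (fun j => u j - t * v j) (fun j => u j - t * v j) = dot u u - 2 * t * dot u v + t * t * dot v v.
Proof. rewrite /dot !sZ sB sD; apply: sE => j; ring. Qed.
Lemma dot_sub_scale_l d (u v c : vec d) t : dot (fun j => u j - t * v j) c = dot u c - t * dot v c.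
Proof. rewrite /dot sZ sB; apply: sE => j; ring. Qed.
Lemma dot_vsub3 d (c z w y : vec d) : dot c (vsub z w) = - (dot c (vsub w y) + dot c (vsub y z)).
Proof. rewrite /dot sD sN; apply: sE => j; rewrite /vsub; ring. Qed.
Lemma bf_neg d (M : 'I_d -> 'I_d -> R) u z w : bf M u (vsub z w) = - bf M u (vsub w z).
Proof. rewrite /bf sN; apply: sE => a; rewrite sN; apply: sE => c; rewrite /vsub; ring. Qed.

Lemma squeeze (a u : nat -> R) c :
  0 < c -> (forall k, 0 <= a k) -> (forall k, c * a k <= u k) -> Un_cv u 0 ->
  forall eps, 0 < eps -> exists N, forall k, (N <= k)%coq_nat -> a k < eps.
Proof.
move=> Hc Ha Hu Hcv eps Heps.
have [N HN] := Hcv (c * eps) (ltac:(apply: Rmult_lt_0_compat; lra)).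
exists N => k Hk.
have := HN k Hk; rewrite /Rdist Rminus_0_r => H.
have := Rle_abs (u k); have := Hu k => H1 H2.
apply: (Rmult_lt_reg_l c) => //; lra.
Qed.

Lemma sqrt_bound y e : 0 <= y -> 0 < e -> sqrt y <= e / 2 + / (2 * e) * y.
Proof.
move=> Hy He.
have H := sqrt_sqrt y Hy.
have Hs := sqrt_pos y.
have : 2 * e * sqrt y <= y + e * e.
  have := pow2_ge_0 (sqrt y - e); rewrite /pow; nra.
move=> H2.
have Hi : / (2 * e) * (2 * e) = 1 by field; lra.
have Hp : 0 < / (2 * e) by apply: Rinv_0_lt_compat; lra.
have := Rmult_le_compat_l (/ (2 * e)) _ _ (Rlt_le _ _ Hp) H2.
rewrite -Rmult_assoc Hi Rmult_1_l.
have : / (2 * e) * (y + e * e) = e / 2 + / (2 * e) * y by field; lra.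
lra.
Qed.

Section Main.
Variable m :nat.
Variable n :'I_m -> nat.
Variable q :nat.
Variable A :Amat m n q.
Variable b :vec q.
Variable f :BV m n -> R.
Variable gf :BV m n -> BV m n.
Variable g :forall i : 'I_m, vec (n i) -> ER.
Variable L :'I_m -> R.
Variable Lr :R.
Variable beta rho :R.
Variable P :forall i : 'I_m, 'I_(n i) -> 'I_(n i) -> R.
Variable x0 :BV m n.
Variable xs :seq 'I_m -> BV m n.
Variable lam :seq 'I_m -> vec q.
Variable xstar :BV m n.
Variable lamstar :vec q.
Variable Hm :(0 < m)%nat.
Variable Hfconv :convexR f.
Variable Hgrad :is_gradient f gf.
Variable Hgcont :continuousBV gf.
Variable Hgprop :forall i, properER (g i).
Variable Hgconv :forall i, convexER (g i).
Variable Hglsc :forall i, lscER (g i).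
Variable Hsol_feas :forall r, resid A b xstar r = 0.
Variable Hsol_fin :Fobj f g xstar <> PInf.
Variable Hsaddle :forall x, ER_le (Fin 0) (Phi f g A b x xstar lamstar).
Variable HLpos :forall i, 0 < L i.
Variable HLi :forall i x y, vnorm (vsub (gf (badd x (Ublk i y)) i) (gf x i)) <= L i * vnorm (y i).
Variable HLr :forall i x y, bnorm (bsub (gf (badd x (Ublk i y))) (gf x)) <= Lr * vnorm (y i).
Variable Hbeta :0 < beta.
Variable Hrho :0 < rho.
Variable Hrho_le :rho <= beta / INR m.
Variable HPsym :forall i a c, P i a c = P i c a.
Variable HPpsd :forall i z, 0 <= qform (P i) z.
Variable HPge :forall i z, L i * dot z z + beta * dot (Aiz A i z) (Aiz A i z) <= qform (P i) z.
Variable Hx0 :Fobj f g x0 <> PInf.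
Variable Hxs0 :xs [::] = x0.
Variable Hlam0 :lam [::] = (fun _ => 0).
Variable Hkeep :forall s i j, j != i -> xs (rcons s i) j = xs s j.
Variable Hargmin :forall s i w, ER_le (subobj A b gf g P beta (xs s) (lam s) i (xs (rcons s i) i)) (subobj A b gf g P beta (xs s) (lam s) i w).
Variable Hlam :forall s i, lam (rcons s i) = (fun r => lam s r - rho * resid A b (xs (rcons s i)) r).

Definition gv (j : 'I_m) (u : vec (n j)) : R := erv (g j u).

Lemma fin_of_ne (a : ER) : a <> PInf -> a = Fin (erv a).
Proof. by case: a. Qed.

Lemma Fobj_big_ne x : Fobj f g x <> PInf -> \big[ER_add/Fin 0]_(i < m) g i (x i) <> PInf.
Proof. by rewrite /Fobj => H E; apply: H; rewrite E. Qed.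

Lemma gfin_ne s : forall j, g j (xs s j) <> PInf.
Proof.
elim/last_ind: s => [|s i IH] j.
  rewrite Hxs0; have := bigER_fin_each _ _ (Fobj_big_ne _ Hx0) j.
  by move=> ->.
case: (eqVneq j i) => [-> | Hji]; last by rewrite Hkeep.
have H := Hargmin s i (xs s i).
move: H; rewrite /subobj (fin_of_ne _ (IH i)).
by case: (g i (xs (rcons s i) i)).
Qed.

Lemma gfin s j : g j (xs s j) = Fin (gv j (xs s j)).
Proof. exact: fin_of_ne (gfin_ne s j). Qed.

Lemma gsfin j : g j (xstar j) = Fin (gv j (xstar j)).
Proof. have := bigER_fin_each _ _ (Fobj_big_ne _ Hsol_fin) j. by []. Qed.

Definition Gv (x : BV m n) : R := \big[Rplus/0]_(j < m) gv j (x j).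
Definition Fs : R := f xstar + Gv xstar.
Definition Fv s : R := f (xs s) + Gv (xs s).
Definition rr s : vec q := resid A b (xs s).
Definition Phiv s : R := Fv s - Fs - dot lamstar (rr s).

Lemma Fobj_s s : Fobj f g (xs s) = Fin (Fv s).
Proof. by rewrite /Fobj (bigER_fin _ _ (fun j => gv j (xs s j)) (gfin s)). Qed.

Lemma Fobj_star : Fobj f g xstar = Fin Fs.
Proof. by rewrite /Fobj (bigER_fin _ _ (fun j => gv j (xstar j)) gsfin). Qed.

Lemma Phi_s s : Phi f g A b (xs s) xstar lamstar = Fin (Phiv s).
Proof.
rewrite /Phi Fobj_star Fobj_s /= /Phiv /rr; congr Fin; ring.
Qed.

Lemma Phiv_ge0 s : 0 <= Phiv s.
Proof. by have := Hsaddle (xs s); rewrite Phi_s. Qed.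


Definition Xv s : R := \big[Rplus/0]_(j < m) qform (P j) (vsub (xs s j) (xstar j)).
Definition ev s : vec q := vsub (lam s) lamstar.
Definition Dv s : R := dot (ev s) (ev s).
Definition Rv s : R := dot (rr s) (rr s).
Definition Cv s : R := dot (ev s) (rr s).
Definition wv s : vec q := fun r0 => lam s r0 - beta * rr s r0.

Lemma xs_step s i : xs (rcons s i) = badd (xs s) (Ublk i (bsub (xs (rcons s i)) (xs s))).
Proof.
apply: BV_ext => j a; rewrite /badd /Ublk /bsub.
case E: (j == i); first ring.
rewrite Hkeep ?E //; ring.
Qed.

Lemma sum_step (F : forall j : 'I_m, vec (n j) -> R) s i :
  \big[Rplus/0]_(j < m) F j (xs (rcons s i) j) =
  \big[Rplus/0]_(j < m) F j (xs s j) - F i (xs s i) + F i (xs (rcons s i) i).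
Proof.
rewrite (sD1 i) [X in _ = X - _ + _](sD1 i).
rewrite (eq_bigr (fun j => F j (xs s j))); first by ring_simplify.
by move=> j Hj; rewrite Hkeep.
Qed.

Lemma Aiz_vsub i (u w : vec (n i)) : Aiz A i (vsub u w) = vsub (Aiz A i u) (Aiz A i w).
Proof. apply: functional_extensionality => r0; exact: Aiz_sub. Qed.

Lemma rr_step s i :
  rr (rcons s i) = (fun r0 => rr s r0 + Aiz A i (vsub (xs (rcons s i) i) (xs s i)) r0).
Proof.
apply: functional_extensionality => r0.
rewrite /rr /resid Aiz_sub.
rewrite (sum_step (fun j u => Aiz A j u r0)); ring.
Qed.

Lemma step_i s i :
  Phiv (rcons s i) + Dv (rcons s i) / (2 * rho) + Xv (rcons s i) / 2 + (beta - rho) / 2 * Rv (rcons s i) <=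
  f (xs s) - f xstar - dot (gf (xs s) i) (vsub (xs s i) (xstar i))
  + (Gv (xs s) - gv i (xs s i)) - (Gv xstar - gv i (xstar i))
  - dot lamstar (rr s) + dot (wv s) (Aiz A i (vsub (xs s i) (xstar i)))
  - Cv s + Dv s / (2 * rho) + Xv s / 2 + beta / 2 * Rv s.
Proof.
have Hdesc := descent _ _ f gf i (L i) Hgrad (HLpos i) (HLi i) (xs s) (bsub (xs (rcons s i)) (xs s)).
rewrite -xs_step in Hdesc.
have Hbs : bsub (xs (rcons s i)) (xs s) i = vsub (xs (rcons s i) i) (xs s i) by [].
rewrite Hbs in Hdesc.
have HVI := VI_argmin _ (P i) (g i) (fun a => gf (xs s) i a - AiT A i (wv s) a) (xs s i)
   (xs (rcons s i) i) (xstar i) (gv i (xs (rcons s i) i)) (gv i (xstar i))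
   (HPsym i) (Hgconv i) (gfin (rcons s i) i) (gsfin i) (Hargmin s i).
have Hc : forall v, dot (fun a => gf (xs s) i a - AiT A i (wv s) a) v =
                    dot (gf (xs s) i) v - dot (wv s) (Aiz A i v).
  move=> v; rewrite -dot_AiT; exact: dot_vsub_l.
rewrite Hc in HVI.
rewrite (dot_vsub3 _ (gf (xs s) i) _ _ (xs s i)) in HVI.
rewrite (bf_neg _ _ (vsub (xs (rcons s i) i) (xs s i))) in HVI.
have Hq := HPge i (vsub (xs (rcons s i) i) (xs s i)).
rewrite !Aiz_vsub in HVI Hq *.
rewrite (dot_vsub3 _ (wv s) _ _ (Aiz A i (xs s i))) in HVI.
set a := vsub (Aiz A i (xs (rcons s i) i)) (Aiz A i (xs s i)) in HVI Hq *.
set d := vsub (xs (rcons s i) i) (xs s i) in Hdesc HVI Hq *.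
set u := vsub (xs (rcons s i) i) (xstar i) in HVI *.
have Hui : vsub (xs s i) (xstar i) = vsub u d.
  by apply: functional_extensionality => j; rewrite /u /d /vsub; ring.
have HX : Xv (rcons s i) = Xv s - qform (P i) (vsub (xs s i) (xstar i)) + qform (P i) u.
  by rewrite /Xv (sum_step (fun j v => qform (P j) (vsub v (xstar j)))).
have Hqui : qform (P i) (vsub (xs s i) (xstar i)) = qform (P i) u - 2 * bf (P i) d u + qform (P i) d.
  by rewrite Hui qform_ge0_expand // (bf_sym _ _ u d).
have Hrr : rr (rcons s i) = (fun r0 => rr s r0 + a r0).
  by rewrite rr_step Aiz_vsub.
have HR : Rv (rcons s i) = Rv s + 2 * dot (rr s) a + dot a a.
  by rewrite /Rv Hrr dot_add_sq.
have Hev : ev (rcons s i) = (fun r0 => ev s r0 - rho * rr (rcons s i) r0).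
  by apply: functional_extensionality => r0; rewrite /ev /vsub Hlam /rr; ring.
have HD : Dv (rcons s i) = Dv s - 2 * rho * dot (ev s) (rr (rcons s i)) + rho * rho * Rv (rcons s i).
  by rewrite /Dv Hev dot_lin_sq.
have Her : dot (ev s) (rr (rcons s i)) = Cv s + dot (ev s) a.
  by rewrite Hrr dotC dot_add_l !(dotC _ _ (ev s)).
have Hea : dot (ev s) a = dot (lam s) a - dot lamstar a by rewrite /ev dot_vsub_l.
have Hwa : dot (wv s) a = dot (lam s) a - beta * dot (rr s) a by rewrite /wv dot_sub_scale_l.
have HD2 : Dv (rcons s i) / (2 * rho) = Dv s / (2 * rho) - (Cv s + dot (ev s) a) + rho / 2 * Rv (rcons s i).
  rewrite HD Her; field; lra.
have Hphi : Phiv (rcons s i) = f (xs (rcons s i)) + (Gv (xs s) - gv i (xs s i) + gv i (xs (rcons s i) i))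
                               - Fs - (dot lamstar (rr s) + dot lamstar a).
  rewrite /Phiv /Fv /Gv (sum_step gv) Hrr.
  have -> : dot lamstar (fun r0 => rr s r0 + a r0) = dot lamstar (rr s) + dot lamstar a.
    by rewrite dot_add_r.
  by [].
have HbR : beta * Rv (rcons s i) = beta * Rv s + 2 * beta * dot (rr s) a + beta * dot a a.
  by rewrite HR; ring.
have Hqd : 0 <= qform (P i) d by exact: HPpsd.
rewrite HD2 Hphi HX.
rewrite /Fs.
have HLi' := HLpos i.
rewrite Hqui in HX.
lra.
Qed.

Lemma sum_Aiz_resid (x : BV m n) r0 :
  \big[Rplus/0]_(i < m) Aiz A i (vsub (x i) (xstar i)) r0 = resid A b x r0.
Proof.
have H := Hsol_feas r0.
rewrite /resid in H *.
rewrite (sE _ (fun i => Aiz A i (x i) r0 - Aiz A i (xstar i) r0)); last by move=> i; exact: Aiz_sub.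
rewrite -sB; lra.
Qed.

Lemma sum_dot_Aiz (w : vec q) (x : BV m n) :
  \big[Rplus/0]_(i < m) dot w (Aiz A i (vsub (x i) (xstar i))) = dot w (resid A b x).
Proof.
rewrite /dot sX; apply: sE => r0.
rewrite -sZ sum_Aiz_resid //.
Qed.

Lemma bdot_bsub_neg (u x y : BV m n) : bdot u (bsub y x) = - bdot u (bsub x y).
Proof. rewrite /bdot sN; apply: sE => i; rewrite /dot sN; apply: sE => j; rewrite /bsub; ring. Qed.

Lemma invm_pos : 0 < / INR m.
Proof. apply: Rinv_0_lt_compat; exact: INRm_pos. Qed.

Lemma step_avg s :
  avg m (fun s' => Phiv s' + Dv s' / (2 * rho) + Xv s' / 2 + (beta - rho) / 2 * Rv s') s <=
  (1 - / INR m) * Phiv s - (1 - / INR m) * Cv s + Dv s / (2 * rho) + Xv s / 2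
  + (beta / 2 - beta / INR m) * Rv s.
Proof.
set C0 := f (xs s) - f xstar + Gv (xs s) - Gv xstar - dot lamstar (rr s) - Cv s
          + Dv s / (2 * rho) + Xv s / 2 + beta / 2 * Rv s.
set S1 := \big[Rplus/0]_(i < m) dot (gf (xs s) i) (vsub (xs s i) (xstar i)).
set S4 := \big[Rplus/0]_(i < m) dot (wv s) (Aiz A i (vsub (xs s i) (xstar i))).
have Hsum : \big[Rplus/0]_(i < m)
   (f (xs s) - f xstar - dot (gf (xs s) i) (vsub (xs s i) (xstar i))
    + (Gv (xs s) - gv i (xs s i)) - (Gv xstar - gv i (xstar i))
    - dot lamstar (rr s) + dot (wv s) (Aiz A i (vsub (xs s i) (xstar i)))
    - Cv s + Dv s / (2 * rho) + Xv s / 2 + beta / 2 * Rv s)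
   = INR m * C0 - S1 - Gv (xs s) + Gv xstar + S4.
  rewrite /S1 /S4 /Gv -(sum_const m C0) sB sB sD sD; apply: sE => i.
  rewrite /C0 /Gv; ring.
have Hle : avg m (fun s' => Phiv s' + Dv s' / (2 * rho) + Xv s' / 2 + (beta - rho) / 2 * Rv s') s <=
           / INR m * (INR m * C0 - S1 - Gv (xs s) + Gv xstar + S4).
  rewrite /avg -Hsum; apply: Rmult_le_compat_l; first exact: (Rlt_le _ _ invm_pos).
  apply: sLe => i; exact: step_i.
apply: (Rle_trans _ _ _ Hle).
have HS4 : S4 = dot (lam s) (rr s) - beta * Rv s.
  by rewrite /S4 sum_dot_Aiz /wv dot_sub_scale_l.
have HS1 : f (xs s) - S1 <= f xstar.
  have := grad_ineq _ _ f gf Hfconv Hgrad (xs s) xstar.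
  rewrite bdot_bsub_neg.
  by have -> : bdot (gf (xs s)) (bsub (xs s) xstar) = S1 by [].
have HCv : Cv s = dot (lam s) (rr s) - dot lamstar (rr s) by rewrite /Cv /ev dot_vsub_l.
have Hm1 : / INR m * INR m = 1 by apply: Rinv_l; apply: Rgt_not_eq; exact: INRm_pos.
have Hip := invm_pos.
have H1 : / INR m * (f (xs s) - S1) <= / INR m * f xstar by apply: Rmult_le_compat_l; lra.
rewrite HS4 /Phiv /Fv /Fs /C0 HCv.
have -> : / INR m * (INR m * (f (xs s) - f xstar + Gv (xs s) - Gv xstar - dot lamstar (rr s) -
   (dot (lam s) (rr s) - dot lamstar (rr s)) + Dv s / (2 * rho) + Xv s / 2 + beta / 2 * Rv s)
   - S1 - Gv (xs s) + Gv xstar + (dot (lam s) (rr s) - beta * Rv s)) =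
   (/ INR m * INR m) * (f (xs s) - f xstar + Gv (xs s) - Gv xstar - dot lamstar (rr s) -
   (dot (lam s) (rr s) - dot lamstar (rr s)) + Dv s / (2 * rho) + Xv s / 2 + beta / 2 * Rv s)
   + / INR m * (- S1 - Gv (xs s) + Gv xstar + (dot (lam s) (rr s) - beta * Rv s)) by ring.
rewrite Hm1 /Rdiv.
lra.
Qed.

Lemma cross_step s i :
  Cv (rcons s i) = (Dv s - Dv (rcons s i)) / (2 * rho) - rho / 2 * Rv (rcons s i).
Proof.
have Hev : ev (rcons s i) = (fun r0 => ev s r0 - rho * rr (rcons s i) r0).
  by apply: functional_extensionality => r0; rewrite /ev /vsub Hlam /rr; ring.
have HD : Dv (rcons s i) = Dv s - 2 * rho * dot (ev s) (rr (rcons s i)) + rho * rho * Rv (rcons s i).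
  by rewrite /Dv Hev dot_lin_sq.
have HC : Cv (rcons s i) = dot (ev s) (rr (rcons s i)) - rho * Rv (rcons s i).
  by rewrite /Cv Hev dot_sub_scale_l.
rewrite HC HD; field; lra.
Qed.

Lemma E5 k (p0 : seq 'I_m) a1 a2 a3 a4 a5 (h1 h2 h3 h4 h5 : seq 'I_m -> R) :
  esum k p0 (fun s => a1 * h1 s + a2 * h2 s + a3 * h3 s + a4 * h4 s + a5 * h5 s) =
  a1 * esum k p0 h1 + a2 * esum k p0 h2 + a3 * esum k p0 h3 + a4 * esum k p0 h4 + a5 * esum k p0 h5.
Proof.
elim: k p0 => [|k IH] p0 //.
rewrite !esum_S (sE _ _ (fun i => IH (rcons p0 i))) -!sD -!sZ; ring.
Qed.

Lemma E2 k (p0 : seq 'I_m) a1 a2 (h1 h2 : seq 'I_m -> R) :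
  esum k p0 (fun s => a1 * h1 s + a2 * h2 s) = a1 * esum k p0 h1 + a2 * esum k p0 h2.
Proof.
elim: k p0 => [|k IH] p0 //.
rewrite !esum_S (sE _ _ (fun i => IH (rcons p0 i))) -!sD -!sZ; ring.
Qed.

Lemma E_ge0 k (p0 : seq 'I_m) (h : seq 'I_m -> R) : (forall s, 0 <= h s) -> 0 <= esum k p0 h.
Proof.
move=> H; rewrite -(esum_const m Hm k p0 0); exact: (esum_le m Hm).
Qed.

Definition EP k := Expect k Phiv.
Definition ED k := Expect k Dv.
Definition EX k := Expect k Xv.
Definition ER' k := Expect k Rv.
Definition EC k := Expect k Cv.

Definition theta := 1 - / INR m.

Lemma stepA k :
  EP k.+1 + / (2 * rho) * ED k.+1 + / 2 * EX k.+1 + (beta - rho) / 2 * ER' k.+1 <=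
  theta * EP k - theta * EC k + / (2 * rho) * ED k + / 2 * EX k + (beta / 2 - beta / INR m) * ER' k.
Proof.
have E1 : Expect k.+1 (fun s => 1 * Phiv s + / (2 * rho) * Dv s + / 2 * Xv s + (beta - rho) / 2 * Rv s + 0 * Rv s)
        = EP k.+1 + / (2 * rho) * ED k.+1 + / 2 * EX k.+1 + (beta - rho) / 2 * ER' k.+1.
  by rewrite /Expect E5 /EP /ED /EX /ER' /Expect; ring.
have E2' : Expect k (fun s => theta * Phiv s + (- theta) * Cv s + / (2 * rho) * Dv s + / 2 * Xv s + (beta / 2 - beta / INR m) * Rv s)
        = theta * EP k - theta * EC k + / (2 * rho) * ED k + / 2 * EX k + (beta / 2 - beta / INR m) * ER' k.
  by rewrite /Expect E5 /EP /ED /EX /ER' /EC /Expect; ring.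
rewrite -E1 -E2' /Expect esum_tower.
apply: (esum_le m Hm) => s.
have := step_avg s.
have -> : avg m (fun s0 => 1 * Phiv s0 + / (2 * rho) * Dv s0 + / 2 * Xv s0 + (beta - rho) / 2 * Rv s0 + 0 * Rv s0) s =
          avg m (fun s' => Phiv s' + Dv s' / (2 * rho) + Xv s' / 2 + (beta - rho) / 2 * Rv s') s.
  by rewrite /avg; congr (_ * _); apply: sE => i; rewrite /Rdiv; ring.
rewrite /theta; lra.
Qed.

Lemma E3 k (p0 : seq 'I_m) a1 a2 a3 (h1 h2 h3 : seq 'I_m -> R) :
  esum k p0 (fun s => a1 * h1 s + a2 * h2 s + a3 * h3 s) =
  a1 * esum k p0 h1 + a2 * esum k p0 h2 + a3 * esum k p0 h3.
Proof.
elim: k p0 => [|k IH] p0 //.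
rewrite !esum_S (sE _ _ (fun i => IH (rcons p0 i))) -!sD -!sZ; ring.
Qed.

Lemma avgC s : avg m Cv s = / (2 * rho) * Dv s + (- / (2 * rho)) * avg m Dv s + (- (rho / 2)) * avg m Rv s.
Proof.
rewrite /avg (sE _ _ (fun i => cross_step s i)).
have Hm1 : INR m <> 0 by apply: Rgt_not_eq; exact: INRm_pos.
rewrite /Rdiv.
rewrite (sE _ (fun i => / (2 * rho) * Dv s + (- / (2 * rho)) * Dv (rcons s i) + (- (rho * / 2)) * Rv (rcons s i))); last by move=> i; ring.
rewrite -!sD -!sZ sum_const; field; lra.
Qed.

Lemma stepB k : EC k.+1 = / (2 * rho) * ED k - / (2 * rho) * ED k.+1 - rho / 2 * ER' k.+1.
Proof.
have E1 : ED k.+1 = Expect k (avg m Dv) by rewrite /ED /Expect esum_tower.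
have E2' : ER' k.+1 = Expect k (avg m Rv) by rewrite /ER' /Expect esum_tower.
have E3' : EC k.+1 = Expect k (avg m Cv) by rewrite /EC /Expect esum_tower.
rewrite E1 E2' E3' /ED /Expect.
have -> : avg m Cv = (fun s => / (2 * rho) * Dv s + (- / (2 * rho)) * avg m Dv s + (- (rho / 2)) * avg m Rv s).
  by apply: functional_extensionality => s; exact: avgC.
rewrite E3; ring.
Qed.

Definition W k := theta * EP k.+1 + / (2 * rho) * (ED k.+1 - theta * ED k) + / 2 * EX k.+1
                  + (beta - rho) / 2 * ER' k.+1.

Lemma EP_ge0 k : 0 <= EP k. Proof. apply: E_ge0 => s; exact: Phiv_ge0. Qed.
Lemma ED_ge0 k : 0 <= ED k. Proof. apply: E_ge0 => s; exact: dot_ge0. Qed.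
Lemma ER_ge0 k : 0 <= ER' k. Proof. apply: E_ge0 => s; exact: dot_ge0. Qed.
Lemma EX_ge0 k : 0 <= EX k. Proof. apply: E_ge0 => s; apply: sge0 => j; exact: HPpsd. Qed.

Lemma W_dec k : W k.+1 + / INR m * EP k.+2 + rho / 2 * / INR m * ER' k.+1 <= W k.
Proof.
have HA := stepA k.+1.
have HB := stepB k.
rewrite HB in HA.
have HR := ER_ge0 k.+1.
have Hle : rho * ER' k.+1 <= beta / INR m * ER' k.+1 by apply: Rmult_le_compat_r.
rewrite /W /theta.
rewrite /theta in HA.
rewrite /Rdiv in Hle HA *.
have Hi : 0 < / (2 * rho) by apply: Rinv_0_lt_compat; lra.
lra.
Qed.

Lemma invm_le1 : / INR m <= 1.
Proof.
have H1 : 1 <= INR m by apply: (le_INR 1); apply/leP.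
rewrite -Rinv_1; apply: Rinv_le_contravar; lra.
Qed.

Lemma W_le0 k : W k <= W 0.
Proof.
elim: k => [|k IH]; first lra.
have := W_dec k; have := EP_ge0 k.+2; have := ER_ge0 k.+1.
have := invm_pos; have := Hrho.
move=> H1 H2 H3 H4 H5.
have : 0 <= / INR m * EP k.+2 by apply: Rmult_le_pos; lra.
have : 0 <= rho / 2 * / INR m * ER' k.+1.
  apply: Rmult_le_pos; last lra. apply: Rmult_le_pos; lra.
lra.
Qed.

Lemma beta_ge_rho : rho <= beta.
Proof.
have H0 := Hrho_le.
have := invm_le1; have := invm_pos.
rewrite /Rdiv in H0.
move=> H1 H2; have : beta * / INR m <= beta * 1 by apply: Rmult_le_compat_l; lra.
lra.
Qed.

Definition Mb := Rmax (ED 0) (2 * rho * W 0 * INR m).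

Lemma ED_bound k : ED k <= Mb.
Proof.
elim: k => [|k IH]; first exact: Rmax_l.
have HW := W_le0 k.
have Hm2 := Rmax_r (ED 0) (2 * rho * W 0 * INR m).
rewrite -/Mb in Hm2.
have Hip := invm_pos; have Hi1 := invm_le1.
have HmM : INR m * / INR m = 1 by apply: Rinv_r; apply: Rgt_not_eq; exact: INRm_pos.
have Hb := beta_ge_rho.
have H1 : 0 <= theta * EP k.+1 by apply: Rmult_le_pos; [rewrite /theta; lra | exact: EP_ge0].
have H2 := EX_ge0 k.+1.
have H3 : 0 <= (beta - rho) / 2 * ER' k.+1 by apply: Rmult_le_pos; [lra | exact: ER_ge0].
have H4 : / (2 * rho) * (ED k.+1 - theta * ED k) <= W 0 by rewrite {1}/W in HW; lra.
have H5 : ED k.+1 - theta * ED k <= 2 * rho * W 0.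
  have Hp : 0 < 2 * rho by lra.
  have := Rmult_le_compat_l (2 * rho) _ _ (Rlt_le _ _ Hp) H4.
  by rewrite -Rmult_assoc Rinv_r ?Rmult_1_l; lra.
have H6 : 2 * rho * W 0 <= Mb * / INR m.
  have := Rmult_le_compat_r (/ INR m) _ _ (Rlt_le _ _ Hip) Hm2.
  by rewrite Rmult_assoc HmM Rmult_1_r.
have H7 : theta * ED k <= theta * Mb by apply: Rmult_le_compat_l; [rewrite /theta; lra | exact: IH].
rewrite /theta in H7 H5.
lra.
Qed.

Lemma W_lb k : - Mb * / (2 * rho) <= W k.
Proof.
have Hb := beta_ge_rho.
have Hip := invm_pos; have Hi1 := invm_le1.
have H1 : 0 <= theta * EP k.+1 by apply: Rmult_le_pos; [rewrite /theta; lra | exact: EP_ge0].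
have H2 := EX_ge0 k.+1.
have H3 : 0 <= (beta - rho) / 2 * ER' k.+1 by apply: Rmult_le_pos; [lra | exact: ER_ge0].
have H4 := ED_ge0 k.+1.
have H5 : theta * ED k <= Mb.
  have := ED_bound k; have := ED_ge0 k.
  rewrite /theta => Ha Hb'.
  have : (1 - / INR m) * ED k <= 1 * ED k by apply: Rmult_le_compat_r; lra.
  lra.
have Hi : 0 < / (2 * rho) by apply: Rinv_0_lt_compat; lra.
have : / (2 * rho) * (ED k.+1 - theta * ED k) >= - Mb * / (2 * rho).
  have : ED k.+1 - theta * ED k >= - Mb by lra.
  move=> H; apply: Rle_ge.
  have := Rmult_le_compat_l (/ (2 * rho)) _ _ (Rlt_le _ _ Hi) (Rge_le _ _ H).
  lra.
rewrite /W; lra.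
Qed.

Lemma W_decr : Un_decreasing W.
Proof.
move=> k; have := W_dec k; have := EP_ge0 k.+2; have := ER_ge0 k.+1.
have := invm_pos; have := Hrho.
move=> H1 H2 H3 H4 H5.
have : 0 <= / INR m * EP k.+2 by apply: Rmult_le_pos; lra.
have : 0 <= rho / 2 * / INR m * ER' k.+1.
  apply: Rmult_le_pos; last lra. apply: Rmult_le_pos; lra.
lra.
Qed.

Lemma W_haslb : has_lb W.
Proof.
exists (Mb * / (2 * rho)) => x [i ->]; rewrite /opp_seq.
have := W_lb i; lra.
Qed.

Lemma Wdiff_cv : Un_cv (fun k => W k - W k.+1) 0.
Proof.
have [l Hl] := decreasing_cv W W_decr W_haslb.
have Hl' : Un_cv (fun k => W k.+1) l.
  move=> eps Heps; have [N HN] := Hl eps Heps; exists N => k Hk; apply: HN; lia.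
have := CV_minus _ _ _ _ Hl Hl'.
by rewrite Rminus_diag.
Qed.

Lemma EP_small eps : 0 < eps -> exists N, forall k, (N <= k)%coq_nat -> EP k.+2 < eps.
Proof.
apply: (squeeze (fun k => EP k.+2) (fun k => W k - W k.+1) (/ INR m) invm_pos).
- move=> k; exact: EP_ge0.
- move=> k; have := W_dec k.
  have H1 : 0 <= rho / 2 * / INR m * ER' k.+1.
    apply: Rmult_le_pos; last exact: ER_ge0. apply: Rmult_le_pos; last by left; exact: invm_pos. lra.
  lra.
- exact: Wdiff_cv.
Qed.

Lemma ER_small eps : 0 < eps -> exists N, forall k, (N <= k)%coq_nat -> ER' k.+1 < eps.
Proof.
have Hc : 0 < rho / 2 * / INR m by apply: Rmult_lt_0_compat; [lra | exact: invm_pos].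
apply: (squeeze (fun k => ER' k.+1) (fun k => W k - W k.+1) _ Hc).
- move=> k; exact: ER_ge0.
- move=> k; have := W_dec k.
  have H1 : 0 <= / INR m * EP k.+2 by apply: Rmult_le_pos; [left; exact: invm_pos | exact: EP_ge0].
  lra.
- exact: Wdiff_cv.
Qed.

Lemma concl1 : ER_cv (fun k => ExpectER k (fun s => Phi f g A b (xs s) xstar lamstar)) 0.
Proof.
move=> eps Heps.
have [N HN] := EP_small eps Heps.
exists N.+2 => k Hk.
exists (EP k); split.
  by rewrite /ExpectER /EP /Expect (esumER_fin m k [::] _ Phiv Phi_s).
have -> : k = (k - 2)%N.+2 by lia.
have H := HN (k - 2)%N (ltac:(lia)).
have := EP_ge0 (k - 2)%N.+2.
move=> H0; rewrite Rminus_0_r Rabs_right; lra.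
Qed.

Lemma concl2 : Un_cv (fun k => Expect k (fun s => vnorm (resid A b (xs s)))) 0.
Proof.
move=> eps Heps.
have Heps2 : 0 < eps * eps by nra.
have [N HN] := ER_small (eps * eps) Heps2.
exists N.+1 => k Hk.
have Hk' : k = (k - 1)%N.+1 by lia.
have H := HN (k - 1)%N (ltac:(lia)).
rewrite -Hk' in H.
have Hup : Expect k (fun s => vnorm (resid A b (xs s))) <= eps / 2 + / (2 * eps) * ER' k.
  have -> : eps / 2 + / (2 * eps) * ER' k = Expect k (fun s => / (2 * eps) * Rv s + eps / 2).
    by rewrite /Expect esum_lin (esum_const m Hm) /ER' /Expect; ring.
  apply: (esum_le m Hm) => s.
  rewrite Rplus_comm; apply: sqrt_bound; [exact: dot_ge0 | lra].
have Hlo : 0 <= Expect k (fun s => vnorm (resid A b (xs s))).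
  apply: E_ge0 => s; exact: vnorm_ge0.
have Hr : / (2 * eps) * ER' k < eps / 2.
  have Hp : 0 < / (2 * eps) by apply: Rinv_0_lt_compat; lra.
  have := Rmult_lt_compat_l _ _ _ Hp H.
  have -> : / (2 * eps) * (eps * eps) = eps / 2 by field; lra.
  done.
rewrite /Rdist Rminus_0_r Rabs_right; lra.
Qed.

End Main.

Theorem mainTheorem5
  (m : nat) (n : 'I_m -> nat) (q : nat)
  (A : Amat m n q) (b : vec q)
  (f : BV m n -> R) (gf : BV m n -> BV m n)
  (g : forall i : 'I_m, vec (n i) -> ER)
  (L : 'I_m -> R) (Lr : R)
  (beta rho : R)
  (P : forall i : 'I_m, 'I_(n i) -> 'I_(n i) -> R)
  (x0 : BV m n)
  (xs : seq 'I_m -> BV m n) (lam : seq 'I_m -> vec q)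
  (xstar : BV m n) (lamstar : vec q)
  (* standing assumptions on the problem *)
  (Hm : (0 < m)%nat)
  (Hfconv : convexR f) (Hgrad : is_gradient f gf) (Hgcont : continuousBV gf)
  (Hgprop : forall i, properER (g i)) (Hgconv : forall i, convexER (g i))
  (Hglsc : forall i, lscER (g i))
  (* existence of a solution / saddle point *)
  (Hsol_feas : forall r, resid A b xstar r = 0)
  (Hsol_fin : Fobj f g xstar <> PInf)
  (Hsaddle : forall x, ER_le (Fin 0) (Phi f g A b x xstar lamstar))
  (* gradient Lipschitz continuity *)
  (HLpos : forall i, 0 < L i)
  (HLi : forall i x y,
     vnorm (vsub (gf (badd x (Ublk i y)) i) (gf x i)) <= L i * vnorm (y i))
  (HLr : forall i x y,
     bnorm (bsub (gf (badd x (Ublk i y))) (gf x)) <= Lr * vnorm (y i))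
  (* parameters *)
  (Hbeta : 0 < beta) (Hrho : 0 < rho) (Hrho_le : rho <= beta / INR m)
  (HPsym : forall i a c, P i a c = P i c a)
  (HPpsd : forall i z, 0 <= qform (P i) z)
  (HPge : forall i z,
     L i * dot z z + beta * dot (Aiz A i z) (Aiz A i z) <= qform (P i) z)
  (* starting point in dom F *)
  (Hx0 : Fobj f g x0 <> PInf)
  (* Algorithm 1; xs s, lam s are the iterates after the history s of chosen blocks;
     r^k = A x^k - b is resid A b (xs s) *)
  (Hxs0 : xs [::] = x0)
  (Hlam0 : lam [::] = (fun _ => 0))
  (Hkeep : forall s i j, j != i -> xs (rcons s i) j = xs s j)
  (Hargmin : forall s i w,
     ER_le (subobj A b gf g P beta (xs s) (lam s) i (xs (rcons s i) i))
           (subobj A b gf g P beta (xs s) (lam s) i w))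
  (Hlam : forall s i,
     lam (rcons s i) = (fun r => lam s r - rho * resid A b (xs (rcons s i)) r)) :
  ER_cv (fun k => ExpectER k (fun s => Phi f g A b (xs s) xstar lamstar)) 0 /\
  Un_cv (fun k => Expect k (fun s => vnorm (resid A b (xs s)))) 0.
Proof.
split; [apply: (concl1 m n q A b f gf g L beta rho P x0 xs lam xstar lamstar) | apply: (concl2 m n q A b f gf g L beta rho P x0 xs lam xstar lamstar)]; eassumption.
Qed.
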